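(* Let $\mathcal{P}\subseteq\mathbb{R}^{m\times m}$ and $n\ge1$. For a family $\{P_{i,j}\}_{i,j\in[n]}$ of $m\times m$ matrices, let $\mathbf{P}\in\mathbb{R}^{nm\times nm}$ be the block matrix whose $(i,j)$-th block is $P_{i,j}$. Let $$S''=\{\{P_{i,j}\}_{i,j\in[n]}:\operatorname{rank}(\mathbf{P})=m,\ P_{i,j}\in\mathcal{P}\ \forall i,j\in[n],\ P_{i,i}=I\ \forall i\in[n]\},$$ and let $S$ be the set of families $\{P_{i,j}\}_{i,j\in[n]}$ with $P_{i,j}\in\mathcal{P}$, $P_{i,k}P_{k,j}=P_{i,j}$ for all $i,j,k\in[n]$, and $P_{i,i}=I$ for all $i\in[n]$. Then $S''=S$.
   Context: $[n]=\{1,\dots,n\}$. *)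

(* Defs.v *)
From HB Require Import structures.
From mathcomp Require Import all_boot all_order all_algebra.
From mathcomp Require Import reals.
Set Implicit Arguments. Unset Strict Implicit. Unset Printing Implicit Defensive.
Import Order.TTheory GRing.Theory Num.Theory.
Local Open Scope ring_scope.

Definition blockP (R : realType) (n m : nat) (Pf : 'I_n -> 'I_n -> 'M[R]_m)
  : 'M[R]_(\sum_(i < n) m, \sum_(j < n) m) :=
  \mxblock_(i < n, j < n) Pf i j.

Definition S2 (R : realType) (n m : nat) (Pcal : 'M[R]_m -> Prop)
  (Pf : 'I_n -> 'I_n -> 'M[R]_m) : Prop :=
  [/\ \rank (blockP Pf) = m,
      (forall i j, Pcal (Pf i j)) &
      (forall i, Pf i i = 1%:M)].

Definition S (R : realType) (n m : nat) (Pcal : 'M[R]_m -> Prop)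
  (Pf : 'I_n -> 'I_n -> 'M[R]_m) : Prop :=
  [/\ (forall i j, Pcal (Pf i j)),
      (forall i j k, Pf i k *m Pf k j = Pf i j) &
      (forall i, Pf i i = 1%:M)].

(* Main.v *)
Require Import Defs.
From HB Require Import structures.
From mathcomp Require Import all_boot all_order all_algebra.
From mathcomp Require Import reals.
Set Implicit Arguments. Unset Strict Implicit. Unset Printing Implicit Defensive.
Import Order.TTheory GRing.Theory Num.Theory.
Local Open Scope ring_scope.

Lemma rank_submxrow (R : realType) (n m r : nat) (A : 'M[R]_(r, \sum_(i < n) m)) j :
  (\rank (submxrow A j) <= \rank A)%N.
Proof.
rewrite -mxrank_tr tr_submxrow -(mxrank_tr A).
by apply: mxrankS; apply: rowsub_sub.
Qed.

Lemma submxcol_sub (R : realType) (n m r : nat) (A : 'M[R]_(\sum_(i < n) m, r)) i :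
  (submxcol A i <= A)%MS.
Proof. exact: rowsub_sub. Qed.

Theorem lemma14 (R : realType) (m n : nat) (Pcal : 'M[R]_m -> Prop) :
  (0 < n)%N ->
  forall Pf : 'I_n -> 'I_n -> 'M[R]_m, S2 Pcal Pf <-> S Pcal Pf.
Proof.
move=> n0 Pf.
have Rb : forall k, submxcol (blockP Pf) k = \mxrow_j Pf k j.
  by move=> k; rewrite /blockP submxcol_matrix.
have Rr : forall i k, submxrow (submxcol (blockP Pf) i) k = Pf i k.
  by move=> i k; rewrite -submxblockEv /blockP mxblockK.
split.
- case=> rk HP Hd; split => // i j k.
  set B := blockP Pf.
  have sRk : (submxcol B k <= B)%MS by apply: submxcol_sub.
  have rRk : (m <= \rank (submxcol B k))%N.
    have := rank_submxrow (submxcol B k) k.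
    by rewrite Rr Hd mxrank1.
  have eRk : (submxcol B k == B)%MS.
    have := mxrank_leqif_eq sRk; move=> /leqifP.
    case: ifP => // _; rewrite ltnNge; move: rk; rewrite -/B => ->.
    by rewrite rRk.
  have sRi : (submxcol B i <= submxcol B k)%MS.
    apply: submx_trans (submxcol_sub B i) _.
    by case/andP: eRk.
  have E := mulmxKpV sRi.
  set X := submxcol B i *m pinvmx (submxcol B k) in E.
  have EX : Pf i k = X.
    by rewrite -(Rr i k) -E -mul_submxrow Rr Hd mulmx1.
  by rewrite -(Rr i j) -E -mul_submxrow Rr EX.
- case=> HP Hm Hd; split => //.
  pose k0 : 'I_n := Ordinal n0.
  have EB : blockP Pf = \mxcol_i Pf i k0 *m \mxrow_j Pf k0 j.
    rewrite mul_mxcol_mxrow /blockP; apply: eq_mxblock => i j.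
    by rewrite Hm.
  apply/eqP; rewrite eqn_leq; apply/andP; split.
    rewrite EB; apply: leq_trans (mxrankM_maxl _ _) _.
    exact: rank_leq_col.
  apply: leq_trans (mxrankS (submxcol_sub (blockP Pf) k0)).
  apply: leq_trans (rank_submxrow _ k0).
  by rewrite Rr Hd mxrank1.
Qed.
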